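(* Let $G$ be a crossing closed graph on $[n]$, let $\unlhd$ be a total order on $E(G)$, and let $S$ be a noncrossing NBC set of $G$ (with respect to $\unlhd$). Viewing each edge of $S$ as the bond with that single edge, the join $\bigvee S$ computed in $L_G$ equals the join $\bigvee S$ computed in $NC_G$.
   Context: All graphs are finite simple graphs with vertex set $[n]=\{1,\dots,n\}$; edges are written $ij$ with $i<j$. Two edges $a_1a_2$ and $b_1b_2$ cross if $a_1<b_1<a_2<b_2$ or $b_1<a_1<b_2<a_2$. A spanning subgraph is identified with its edge set. A bond of $G$ is a spanning subgraph each of whose connected components is an induced subgraph of $G$; for a bond $H$, $\pi(H)$ is the partition of $[n]$ into vertex sets of its components. A set partition is crossing if there are distinct blocks $B,B'$ and $a,c\in B$, $b,d\in B'$ with $a<b<c<d$, noncrossing otherwise; $H$ is noncrossing if $\pi(H)$ is. $L_G$ is the lattice of all bonds ordered by inclusion of edge sets, $NC_G$ the subposet of noncrossing bonds. Two crossing edges $e,f$ are crossing closed if among all induced connected subgraphs of $G$ containing $e$ and $f$ there is a unique minimal one under containment; $G$ is crossing closed if every pair of crossing edges is (in which case $NC_G$ is a lattice). Given the total order $\unlhd$, a broken circuit is the edge set of a cycle of $G$ with its $\unlhd$-smallest edge removed; an NBC set is a set of edges containing no broken circuit; a noncrossing NBC set is an NBC set no two of whose edges cross. *)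

(* Defs.v *)
(* Vertices [n] are modelled by 'I_n (0-based, same order). *)
From mathcomp Require Import all_boot.
Set Implicit Arguments. Unset Strict Implicit. Unset Printing Implicit Defensive.

Section Defs.
Variable n : nat.
Notation V := 'I_n.
Notation E := (V * V)%type.

Definition simple_graph (G : {set E}) : bool := [forall e in G, e.1 < e.2].

Definition mk_edge (x y : V) : E := if x < y then (x, y) else (y, x).

Definition adj (H : {set E}) : rel V := fun x y => ((x, y) \in H) || ((y, x) \in H).

Definition conn (H : {set E}) (x y : V) : bool := connect (adj H) x y.

(* bond: spanning subgraph whose components are induced subgraphs of G *)
Definition bond (G H : {set E}) : bool :=
  (H \subset G) && [forall e in G, conn H e.1 e.2 ==> (e \in H)].

Definition noncrossing_bond (G H : {set E}) : bool :=
  bond G H &&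
  ~~ [exists a : V, exists b : V, exists c : V, exists d : V,
        [&& a < b, b < c, c < d, conn H a c, conn H b d & ~~ conn H a b]].

Definition cross (e f : E) : bool :=
  ((e.1 < f.1) && (f.1 < e.2) && (e.2 < f.2)) ||
  ((f.1 < e.1) && (e.1 < f.2) && (f.2 < e.2)).

Definition induced_connected (G : {set E}) (W : {set V}) : bool :=
  [forall x in W, forall y in W,
     connect (fun u v => [&& u \in W, v \in W & adj G u v]) x y].

Definition icsub (G : {set E}) (e f : E) (W : {set V}) : bool :=
  induced_connected G W && [&& e.1 \in W, e.2 \in W, f.1 \in W & f.2 \in W].

(* minimal under containment (induced subgraphs are ordered by vertex sets) *)
Definition icsub_minimal (G : {set E}) (e f : E) (W : {set V}) : bool :=
  icsub G e f W && [forall W' : {set V}, (W' \proper W) ==> ~~ icsub G e f W'].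

Definition crossing_closed_pair (G : {set E}) (e f : E) : Prop :=
  exists W, icsub_minimal G e f W /\
            forall W', icsub_minimal G e f W' -> W' = W.

Definition crossing_closed (G : {set E}) : Prop :=
  forall e f, e \in G -> f \in G -> cross e f -> crossing_closed_pair G e f.

Definition total_order_on (G : {set E}) (le : rel E) : Prop :=
  [/\ {in G, reflexive le}, {in G & &, transitive le},
      {in G &, antisymmetric le} & {in G &, total le}].

Definition cycle_edges (s : seq V) : {set E} :=
  [set mk_edge p.1 p.2 | p in zip s (rot 1 s)].

Definition is_cycle (G C : {set E}) : Prop :=
  exists s : seq V, [/\ uniq s, 3 <= size s, C = cycle_edges s & C \subset G].

Definition broken_circuit (G : {set E}) (le : rel E) (B : {set E}) : Prop :=
  exists C, exists m, [/\ is_cycle G C, m \in C, (forall f, f \in C -> le m f)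
                        & B = C :\ m].

Definition NBC (G : {set E}) (le : rel E) (S : {set E}) : Prop :=
  S \subset G /\ forall B, broken_circuit G le B -> ~ (B \subset S).

Definition noncrossing_NBC (G : {set E}) (le : rel E) (S : {set E}) : Prop :=
  NBC G le S /\ forall e f, e \in S -> f \in S -> ~~ cross e f.

(* J is the join, in the subposet P (ordered by inclusion), of the
   single-edge bonds {e}, e in S *)
Definition is_join_in (P : {set E} -> bool) (S J : {set E}) : Prop :=
  [/\ P J, (forall e, e \in S -> [set e] \subset J)
     & forall K, P K -> (forall e, e \in S -> [set e] \subset K) -> J \subset K].

End Defs.

(* Main.v *)
Require Import Defs.
From mathcomp Require Import all_boot.
From mathcomp Require Import zify.

Section Aux.
Local Set Implicit Arguments.
Local Unset Strict Implicit.
Variable n : nat.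
Notation V := 'I_n.
Notation E := (V * V)%type.

Lemma step_lem (T : finType) (r : rel T) (P : pred T) p q :
  connect r p q -> P p -> ~~ P q ->
  exists u v, [/\ connect r p u, r u v, P u & ~~ P v].
Proof.
move/connectP=> [s]; elim: s p => [|z s IH] p /=.
  by move=> _ -> Hp Hq; rewrite Hp in Hq.
move=> /andP[rpz pth] lq Pp nPq.
case Pz: (P z).
  have [u [v [c1 r1 Pu nPv]]] := IH z pth lq Pz nPq.
  exists u, v; split => //; exact: connect_trans (connect1 rpz) c1.
by exists p, z; rewrite Pz Pp connect0 rpz.
Qed.

Lemma adj_sym (H : {set E}) : symmetric (adj H).
Proof. by move=> x y; rewrite /adj orbC. Qed.

Lemma conn_sym (H : {set E}) x y : conn H x y = conn H y x.
Proof. by rewrite /conn (sym_connect_sym (adj_sym H)). Qed.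

Lemma conn_mono (A B : {set E}) x y : A \subset B -> conn A x y -> conn B x y.
Proof.
move=> sAB; apply: connect_sub => u v /orP[h|h]; apply: connect1;
by rewrite /adj (subsetP sAB _ h) ?orbT.
Qed.

Lemma conn_edge (A : {set E}) e : e \in A -> conn A e.1 e.2.
Proof. by case: e => a b h; apply: connect1; rewrite /adj h. Qed.

Definition inside (x y : V) : pred V := fun u => (x < u) && (u < y).

Variable S : {set E}.
Hypothesis simp : forall e, e \in S -> e.1 < e.2.
Hypothesis nc : forall e f, e \in S -> f \in S -> ~~ cross e f.

Lemma ne_nat (u x : V) : u != x -> (u : nat) <> x.
Proof. by move=> h e; move/eqP: h; apply; apply: val_inj. Qed.

Lemma cross_lem x y u v : (x, y) \in S -> adj S u v ->
  inside x y u -> ~~ inside x y v ->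
  u != x -> u != y -> v != x -> v != y -> False.
Proof.
rewrite /inside => Hxy Ha /andP[h1 h2] h3 /ne_nat n1 /ne_nat n2 /ne_nat n3 /ne_nat n4.
have sxy := simp Hxy.
case/orP: Ha => Hf.
  have s := simp Hf; have := nc Hxy Hf; rewrite /cross /= in s sxy *; move: h3 s sxy.
  lia.
have s := simp Hf; have := nc Hf Hxy; rewrite /cross /= in s sxy *; move: h3 s sxy.
lia.
Qed.

Lemma key1 x y p q : (x, y) \in S -> conn S p q -> ~~ conn S x p ->
  inside x y p -> ~~ inside x y q -> False.
Proof.
move=> Hxy Cpq nCxp ip iq.
have [u [v [Cpu Auv iu iv]]] := step_lem Cpq ip iq.
have Cpv : conn S p v by apply: connect_trans Cpu (connect1 Auv).
have Cxy : conn S x y := conn_edge Hxy.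
have ne : forall w, conn S p w -> (w != x) && (w != y).
  move=> w Cw; apply/andP; split; apply/negP => /eqP E1; subst w.
    by move: nCxp; rewrite conn_sym Cw.
  move/negP: nCxp; apply; apply: connect_trans Cxy _.
  by rewrite -/(conn S y p) conn_sym.
have /andP[n1 n2] := ne _ Cpu; have /andP[n3 n4] := ne _ Cpv.
exact: (cross_lem Hxy Auv iu iv n1 n2 n3 n4).
Qed.

Lemma key x y p q : (x, y) \in S -> conn S p q -> ~~ conn S x p ->
  inside x y p != inside x y q -> False.
Proof.
move=> Hxy Cpq nCxp; case ip: (inside x y p); case iq: (inside x y q) => //= _.
  by apply: (key1 Hxy Cpq nCxp); rewrite ?ip ?iq.
apply: (key1 (p := q) (q := p) Hxy); rewrite ?ip ?iq //.
  by rewrite conn_sym.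
apply/negP => C; move/negP: nCxp; apply; apply: connect_trans C _.
by rewrite -/(conn S q p) conn_sym.
Qed.

Lemma main_nc (a b c d : V) : a < b -> b < c -> c < d -> conn S a c -> conn S b d ->
  ~~ conn S a b -> False.
Proof.
move=> ab bc cd Cac Cbd nCab.
have ib : inside a c b by rewrite /inside ab bc.
have id : ~~ inside a c d by rewrite /inside negb_and; apply/orP; right; rewrite -leqNgt ltnW.
have [u [v [Cbu Auv iu iv]]] := step_lem Cbd ib id.
have Cbv : conn S b v by apply: connect_trans Cbu (connect1 Auv).
have ne : forall w, conn S b w -> (w != a) && (w != c).
  move=> w Cw; apply/andP; split; apply/negP => /eqP E1; subst w.
    by move: nCab; rewrite conn_sym Cw.
  move/negP: nCab; apply; apply: connect_trans Cac _.
  by rewrite -/(conn S c b) conn_sym.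
have /andP[/ne_nat n1 /ne_nat n2] := ne _ Cbu; have /andP[/ne_nat n3 /ne_nat n4] := ne _ Cbv.
have nCua : ~~ conn S u a.
  apply/negP => C; move/negP: nCab; apply; rewrite conn_sym.
  exact: connect_trans Cbu C.
have nCva : ~~ conn S v a.
  apply/negP => C; move/negP: nCab; apply; rewrite conn_sym.
  exact: connect_trans Cbv C.
move: iu iv; rewrite /inside => iu iv.
case/orP: Auv => Hf.
  have s := simp Hf; rewrite /= in s.
  apply: (key Hf Cac) => //=; rewrite /inside; move: iu iv s.
  lia.
have s := simp Hf; rewrite /= in s.
apply: (key Hf Cac) => //=; rewrite /inside; move: iu iv s.
lia.
Qed.

End Aux.

Theorem lemma3p8 (n : nat) (G : {set 'I_n * 'I_n}) (le : rel ('I_n * 'I_n))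
  (S : {set 'I_n * 'I_n}) :
  simple_graph G -> crossing_closed G -> total_order_on G le ->
  noncrossing_NBC G le S ->
  exists J, is_join_in (bond G) S J /\ is_join_in (noncrossing_bond G) S J.
Proof.
move=> /forall_inP sG _ _ [[sSG _] ncS].
have simp : forall e, e \in S -> e.1 < e.2 by move=> e /(subsetP sSG) /sG.
have nc : forall e f, e \in S -> f \in S -> ~~ cross e f by move=> e f h1 h2; exact: ncS.
pose J := [set e in G | conn S e.1 e.2].
have SJ : S \subset J.
  by apply/subsetP => e he; rewrite inE (subsetP sSG _ he) conn_edge.
have JS : forall x y, conn J x y -> conn S x y.
  move=> x y; apply: connect_sub => u v /orP[h|h]; move: h; rewrite inE => /andP[_ h] //.
  by rewrite -/(conn S u v) conn_sym.
have bJ : bond G J.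
  apply/andP; split; first by apply/subsetP => e; rewrite inE => /andP[].
  apply/forall_inP => e eG; apply/implyP => /JS h; by rewrite inE eG h.
have sing : forall e, e \in S -> [set e] \subset J.
  by move=> e he; rewrite sub1set (subsetP SJ).
have least : forall K, bond G K -> (forall e, e \in S -> [set e] \subset K) -> J \subset K.
  move=> K /andP[_ /forall_inP bK] hK; apply/subsetP => e; rewrite inE => /andP[eG Ce].
  apply: (implyP (bK e eG)); apply: conn_mono Ce.
  by apply/subsetP => f hf; move: (hK f hf); rewrite sub1set.
exists J; split; split => //.
- apply/andP; split => //; apply/negP => /existsP[a /existsP[b /existsP[c /existsP[d]]]].
  case/and5P => ab bc cd Cac /andP[Cbd nCab].
  apply: (main_nc simp nc ab bc cd (JS _ _ Cac) (JS _ _ Cbd)).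
  by apply/negP => C; move/negP: nCab; apply; apply: conn_mono SJ C.
- by move=> K /andP[bK _]; apply: least.
Qed.
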